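(* Let $q\in(0,1)$ be a constant. Let $N\sim\mathrm{B}(M,\alpha)$ and $N_1\sim\mathrm{B}(M-1,\alpha)$ be two statistically independent binomial random variables with $M\ge 2$ and $\alpha\in(0,q]\cup\{1\}$. Then \[ \Pr\{N\ge N_1+1 \mid N\ge 1\}\ \ge\ \tfrac12\big[1-1/\sqrt{2\pi}\big]+o_M(1), \] where $o_M(1)$ depends only on $q$ and $M$ (not on $\alpha$) and tends to $0$ as $M\to+\infty$.
   Context: $\mathrm{B}(M,\alpha)$ denotes the binomial distribution with $M$ trials and success probability $\alpha$. *)

(* Defs.v *)
From HB Require Import structures.
From mathcomp Require Import all_boot all_order all_algebra.
From mathcomp Require Import all_classical all_reals all_analysis.
Set Implicit Arguments. Unset Strict Implicit. Unset Printing Implicit Defensive.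
Import Order.TTheory GRing.Theory Num.Theory.
Local Open Scope ring_scope.

Definition binom_pmf {R : realType} (M : nat) (a : R) (k : nat) : R :=
  ('C(M, k))%:R * a ^+ k * (1 - a) ^+ (M - k).

(* Joint law of independent N ~ B(M,a), N1 ~ B(M-1,a):
   probability of the event {(N,N1) | P N N1}. *)
Definition indep_binom_prob {R : realType} (M : nat) (a : R)
    (P : nat -> nat -> bool) : R :=
  \sum_(k < M.+1) \sum_(j < M) (if P k j then binom_pmf M a k * binom_pmf M.-1 a j else 0).

Definition cond_prob_lemma6 {R : realType} (M : nat) (a : R) : R :=
  indep_binom_prob M a (fun k j => (j.+1 <= k)%N && (1 <= k)%N)
  / indep_binom_prob M a (fun k j => (1 <= k)%N).

(* Main.v *)
Require Import Defs.
From HB Require Import structures.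
From mathcomp Require Import all_boot all_order all_algebra.
From mathcomp Require Import all_classical all_reals all_analysis.
From mathcomp Require Import ring lra zify.
Import Order.TTheory GRing.Theory Num.Theory.
Import numFieldNormedType.Exports.
Local Open Scope classical_set_scope.
Local Open Scope ring_scope.

Section S.
Variable R : realType.
Variable a : R.

Lemma pmf_out n k : (n < k)%N -> binom_pmf n a k = 0.
Proof. by move=> h; rewrite /binom_pmf bin_small // mul0r mul0r. Qed.

Lemma pmf0S n : binom_pmf n.+1 a 0 = (1 - a) * binom_pmf n a 0.
Proof. by rewrite /binom_pmf !bin0 !expr0 !subn0 exprS; ring. Qed.

Lemma pmfSS n k : binom_pmf n.+1 a k.+1 =
  (1 - a) * binom_pmf n a k.+1 + a * binom_pmf n a k.
Proof.
rewrite /binom_pmf binS natrD subSS.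
case: (ltnP n k.+1) => h.
  rewrite bin_small // mul0r mul0r mulr0 add0r.
  have -> : (n - k = 0)%N by lia.
  rewrite exprS; ring.
have -> : (n - k = (n - k.+1).+1)%N by lia.
rewrite !exprS; ring.
Qed.

Lemma pmf_ge0 n k : 0 <= a <= 1 -> 0 <= binom_pmf n a k.
Proof.
move=> /andP[h0 h1]; rewrite /binom_pmf !mulr_ge0 ?exprn_ge0 //; lra.
Qed.

Lemma pmf_sum n : \sum_(k < n.+1) binom_pmf n a k = 1.
Proof.
have := exprDn (1 - a) a n; rewrite subrK expr1n => ->.
apply: eq_bigr => i _; rewrite /binom_pmf; ring.
Qed.
Definition Asum m (p : nat -> R) :=
  \sum_(k < m) \sum_(j < m) (if (j < k)%N then p k * p j else 0).
Definition S0 m (p : nat -> R) := \sum_(k < m) p k ^+ 2.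

Lemma sq_decomp m (p : nat -> R) : (\sum_(k < m) p k) ^+ 2 = 2 * Asum m p + S0 m p.
Proof.
rewrite expr2 mulr_suml.
have E : forall k j : 'I_m, p k * p j =
  (if (j < k)%N then p k * p j else 0) + (if (k < j)%N then p j * p k else 0)
  + (if (j == k :> nat) then p k ^+ 2 else 0).
  move=> k j; case: ltngtP => h; rewrite ?addr0 ?add0r //.
  - by rewrite mulrC.
  - by rewrite expr2 h.
transitivity (\sum_(k < m) \sum_(j < m) ((if (j < k)%N then p k * p j else 0) + (if (k < j)%N then p j * p k else 0)
  + (if (j == k :> nat) then p k ^+ 2 else 0))).
  apply: eq_bigr => k _; rewrite mulr_sumr; apply: eq_bigr => j _; exact: E.
under eq_bigr do rewrite !big_split /=.
rewrite !big_split /= [X in _ + X + _]exchange_big /= mulr2n mulrDl mul1r.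
congr (_ + _).
apply: eq_bigr => k _; rewrite -big_mkcond /= (big_pred1 k) //.
Qed.
Lemma A_ge_s1 m (p : nat -> R) : (forall k, 0 <= p k) ->
  \sum_(k < m) p k.+1 * p k <= Asum m.+1 p.
Proof.
move=> p0; rewrite /Asum big_ord_recl /= big1_eq add0r.
apply: ler_sum => k _.
rewrite (bigD1 (inord k)) //= inordK; last by rewrite ltnS ltnW.
rewrite /bump /= add1n ltnSn lerDl.
apply: sumr_ge0 => j _; case: ifP => _ //; exact: mulr_ge0.
Qed.
Lemma S0_rec n : S0 n.+2 (binom_pmf n.+1 a) =
  ((1 - a) ^+ 2 + a ^+ 2) * S0 n.+1 (binom_pmf n a)
  + 2 * a * (1 - a) * \sum_(k < n.+1) binom_pmf n a k.+1 * binom_pmf n a k.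
Proof.
set p := binom_pmf n a.
have h1 : \sum_(k < n.+1) p k.+1 ^+ 2 = S0 n.+1 p - p 0%N ^+ 2.
  rewrite /S0 big_ord_recr /= /p pmf_out // expr0n /= addr0.
  by rewrite big_ord_recl /= [_ + \sum_(i < n) _]addrC addrK.
rewrite /S0 big_ord_recl /= pmf0S.
have E : forall k : 'I_n.+1, binom_pmf n.+1 a (bump 0 k) ^+ 2 =
  (1 - a) ^+ 2 * p k.+1 ^+ 2 + a ^+ 2 * p k ^+ 2 + 2 * a * (1 - a) * (p k.+1 * p k).
  by move=> k; rewrite /bump /= add1n pmfSS /p; ring.
under eq_bigr do rewrite E.
rewrite !big_split /= -!mulr_sumr h1 /S0 -/p; ring.
Qed.
Lemma S0_bound n : 0 <= a <= 1 ->
  3 * S0 n.+1 (binom_pmf n a) <= 1 + 2 * (1 - 3 * a * (1 - a)) ^+ n.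
Proof.
move=> ha; have /andP[ha0 ha1] := ha.
have x0 : 0 <= 1 - 3 * a * (1 - a) by nra.
elim: n => [|n IH].
  rewrite /S0 big_ord1 /binom_pmf /= bin0 !expr0 mul1r mulr1. lra.
have p0 : forall k, 0 <= binom_pmf n a k by move=> k; exact: pmf_ge0.
have hs := A_ge_s1 n (binom_pmf n a) p0.
have e1 : \sum_(k < n.+1) binom_pmf n a k.+1 * binom_pmf n a k =
   \sum_(k < n) binom_pmf n a k.+1 * binom_pmf n a k.
  by rewrite big_ord_recr /= pmf_out // mul0r addr0.
have hq := sq_decomp n.+1 (binom_pmf n a).
rewrite pmf_sum expr1n in hq.
rewrite S0_rec e1.
set s := S0 _ _ in IH hq *; set A := Asum _ _ in hs hq.
set s1 := \sum_(k < n) _ in hs *.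
set y := _ ^+ n in IH *.
have hab : 0 <= a * (1 - a) by nra.
have h2 : 2 * s1 <= 1 - s by lra.
have h3 := ler_wpM2l hab h2.
have h4 := ler_wpM2l x0 IH.
rewrite -subr_le0.
have -> : 3 * (((1 - a) ^+ 2 + a ^+ 2) * s + 2 * a * (1 - a) * s1) - (1 + 2 * (1 - 3 * a * (1 - a)) ^+ n.+1)
  = 3 * (a * (1 - a) * (2 * s1) - a * (1 - a) * (1 - s)) + ((1 - 3 * a * (1 - a)) * (3 * s) - (1 - 3 * a * (1 - a)) * (1 + 2 * y)).
  rewrite /y [_ ^+ n.+1]exprS; clearbody s s1 A; ring.
move: (a * (1 - a) * (2 * s1)) (a * (1 - a) * (1 - s)) ((1 - 3 * a * (1 - a)) * (3 * s)) ((1 - 3 * a * (1 - a)) * (1 + 2 * y)) h3 h4 => u1 u2 v1 v2 h3 h4.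
clear -h3 h4; lra.
Qed.
Lemma den_eq n : indep_binom_prob n.+1 a (fun k j => (1 <= k)%N) = 1 - (1 - a) ^+ n.+1.
Proof.
rewrite /indep_binom_prob big_ord_recl /= big1_eq add0r.
have := pmf_sum n.+1; rewrite big_ord_recl /= => h.
have e0 : binom_pmf n.+1 a 0 = (1 - a) ^+ n.+1.
  by rewrite /binom_pmf bin0 expr0 subn0 mul1r mul1r.
rewrite e0 in h.
transitivity (\sum_(i < n.+1) binom_pmf n.+1 a (bump 0 i)); last first.
  move: h; set S := \sum_(i < n.+1) _; lra.
apply: eq_bigr => i _.
rewrite -[RHS]mulr1 -(pmf_sum n) mulr_sumr; apply: eq_bigr => j _.
by rewrite /bump /=.
Qed.
Lemma num_eq n : indep_binom_prob n.+1 a (fun k j => (j.+1 <= k)%N && (1 <= k)%N)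
  = Asum n.+1 (binom_pmf n a) + a * S0 n.+1 (binom_pmf n a).
Proof.
set p := binom_pmf n a.
rewrite /indep_binom_prob big_ord_recl /= big1_eq add0r.
have E : forall i j : 'I_(n.+1),
  (if (j < bump 0 i)%N && (0 < bump 0 i)%N
   then binom_pmf n.+1 a (bump 0 i) * binom_pmf n a j else 0)
  = (1 - a) * (if (j < i.+1)%N then p i.+1 * p j else 0)
    + a * ((if (j < i)%N then p i * p j else 0) + (if (j == i :> nat) then p i ^+ 2 else 0)).
  move=> i j; rewrite /bump /= add1n ltnS pmfSS andbT -/p.
  case: ltngtP => h; rewrite ?ltnS.
  - ring.
  - ring.
  - rewrite expr2 h; ring.
under eq_bigr do under eq_bigr do rewrite E.
under eq_bigr do rewrite big_split /= -!mulr_sumr big_split /=.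
rewrite big_split /= -!mulr_sumr big_split /= -/(Asum n.+1 p).
have hZ : \sum_(i < n.+1) \sum_(j < n.+1) (if (j == i :> nat) then p i ^+ 2 else 0)
  = S0 n.+1 p.
  apply: eq_bigr => i _; rewrite -big_mkcond /= (big_pred1 i) //.
have hX : \sum_(i < n.+1) \sum_(j < n.+1) (if (j < i.+1)%N then p i.+1 * p j else 0)
  = Asum n.+1 p.
  rewrite /Asum big_ord_recr /= [in RHS]big_ord_recl /= big1_eq add0r.
  rewrite [X in _ + X]big1 ?addr0 //.
  by move=> j _; rewrite /p pmf_out // mul0r; case: ifP.
rewrite hZ hX; ring.
Qed.
End S.


Theorem lemma6 (R : realType) (q : R) (hq0 : 0 < q) (hq1 : q < 1) :
  exists f : nat -> R, f @ \oo --> (0 : R) /\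
    forall (M : nat) (a : R), (2 <= M)%N -> ((0 < a /\ a <= q) \/ a = 1) ->
      cond_prob_lemma6 M a >= 2^-1 * (1 - (Num.sqrt (2 * pi))^-1) + f M.
Proof.
exists (fun _ => 0); split; first exact: cvg_cst.
move=> [|n] // x hM hx.
have [x0 x1] : 0 < x /\ x <= 1.
  by case: hx => [[h1 h2]|->]; split => //; lra.
have hc : 2^-1 * (1 - (Num.sqrt (2 * pi))^-1) <= 3^-1 :> R.
  have hpi : pi < 4 :> R by have := @pihalf_lt2 R; lra.
  have hr : Num.sqrt (2 * pi) <= 3 :> R.
    have -> : 3 = Num.sqrt (3 ^+ 2) :> R by rewrite sqrtr_sqr ger0_norm.
    rewrite ler_sqrt; [lra | lra].
  have hr0 : 0 < Num.sqrt (2 * pi) :> R.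
    by rewrite sqrtr_gt0; have := @pi_gt0 R; lra.
  have : 3^-1 <= (Num.sqrt (2 * pi))^-1 :> R.
    by rewrite lef_pV2 // posrE //.
  lra.
rewrite addr0 /cond_prob_lemma6 num_eq den_eq.
set p := binom_pmf n x.
have hq := @sq_decomp R n.+1 p.
rewrite /p pmf_sum expr1n -/p in hq.
have hS := @S0_bound R x n.
set s := S0 _ n.+1 p in hq hS *; set A := Asum _ n.+1 p in hq *.
have s0 : 0 <= s by apply: sumr_ge0 => k _; exact: sqr_ge0.
have hb0 : 0 <= 1 - x by lra.
have hbn : 0 <= (1 - x) ^+ n by exact: exprn_ge0.
have hD : 0 < 1 - (1 - x) ^+ n.+1.
  by rewrite subr_gt0 exprn_ilt1 //; lra.
rewrite ler_pdivlMr //.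
have key : s * (3 - 6 * x) <= 1 + 2 * (1 - x) ^+ n.+1.
  rewrite exprS.
  have hB1 : 0 <= (1 - x) * (1 - x) ^+ n by exact: mulr_ge0.
  case: (lerP (2^-1) x) => hx2.
    have : s * (3 - 6 * x) <= 0 by apply: mulr_ge0_le0 => //; lra.
    lra.
  have hS' := hS (ltac:(apply/andP; split; lra)).
  have hxb : (1 - 3 * x * (1 - x)) ^+ n <= (1 - x) ^+ n.
    apply: lerXn2r; rewrite ?nnegrE; nra.
  have h1 : (1 - 2 * x) * (3 * s) <= (1 - 2 * x) * (1 + 2 * (1 - x) ^+ n).
    apply: ler_wpM2l; lra.
  have hxB : 0 <= x * (1 - x) ^+ n by apply: mulr_ge0 => //; lra.
  move: h1 hxB hB1 hbn; set B := (1 - x) ^+ n => h1 hxB hB1 hbn.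
  have e : s * (3 - 6 * x) = (1 - 2 * x) * (3 * s) by ring.
  rewrite e; apply: (le_trans h1).
  have e2 : 1 + 2 * ((1 - x) * B) - (1 - 2 * x) * (1 + 2 * B) = 2 * x + 2 * (x * B) by ring.
  rewrite -subr_ge0 e2; lra.
have hDc : 2^-1 * (1 - (Num.sqrt (2 * pi))^-1) * (1 - (1 - x) ^+ n.+1)
   <= 3^-1 * (1 - (1 - x) ^+ n.+1).
  by apply: ler_wpM2r => //; exact: ltW.
apply: (le_trans hDc).
move: key hD hq; set B1 := (1 - x) ^+ n.+1 => key hD hq.
have e : s * (3 - 6 * x) = 3 * s - 6 * (x * s) by ring.
rewrite e in key.
move: (x * s) key => xs key.
rewrite mulrC; lra.
Qed.
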